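(* Let $T$ be a p-string of length $n$ over disjoint alphabets $\Sigma$ and $\Pi$, with $\sigma=|\Sigma|$ and $\pi=|\Pi|$. The right-to-left construction algorithm described below builds $\mathrm{PPH}(T[i..])$ for $i=n,\ldots,1$, and runs in a total of $O(n\log(\sigma+\pi))$ time with $O(n)$ space.
   Context: A p-string is a finite string over $\Sigma\cup\Pi$. For a string $S$, $S[i]$ is its $i$-th character, $S[i..j]$ is the substring from position $i$ to $j$ (empty if $j<i$), and $S[i..]=S[i..|S|]$. The previous encoding $\mathrm{prev}(S)$ of a p-string $S$ of length $n$ is the sequence of length $n$ defined by: - $\mathrm{prev}(S)[i]=S[i]$ if $S[i]\in\Sigma$; - $\mathrm{prev}(S)[i]=0$ if $S[i]\in\Pi$ does not occur in $S[1..i-1]$; - $\mathrm{prev}(S)[i]=i-j$ otherwise, where $j<i$ is the largest position with $S[j]=S[i]$. Sequence hash tree. Let $\langle S_1,\ldots,S_k\rangle$ be a sequence of strings with $S_1=\varepsilon$ and with $S_i$ not a prefix of $S_j$ for any $j<i$. Its sequence hash tree is built as follows. Start from a root representing $\varepsilon$. For $i=2,\ldots,k$, insert as a new node the shortest prefix $p_i$ of $S_i$ that is not yet a node. Attach it as a child of the longest prefix $q_i$ of $S_i$ that is already a node, via an edge labeled $S_i[|q_i|+1]$. $\mathrm{PPH}(T[i..])$ is the sequence hash tree of $\langle\varepsilon,\mathrm{prev}(T[n..]),\ldots,\mathrm{prev}(T[i..])\rangle$. Nodes are identified with their path labels, and $|v|$ is the depth. The node with id $j$ is the node inserted for $\mathrm{prev}(T[j..])$.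 Reversed suffix links are defined as follows: - $\mathrm{rslink}(a,v)=av$ if $a\in\Sigma\cup\{0\}$ and $av$ is a node; - $\mathrm{rslink}(a,v)=0\,v[1..a-1]\,a\,v[a+1..|v|]$ if $a\in\{1,\ldots,n-1\}$, $v[a]=0$, and that string is a node; - otherwise $\mathrm{rslink}(a,v)$ is undefined. An auxiliary node $\perp$ of depth $-1$ is the parent of the root $r$, with $\mathrm{rslink}(a,\perp)=r$ for $a\in\Sigma\cup\{0\}$. Algorithm. Start from the heap consisting of the root only. For each position, maintain (for example, in a balanced search tree) the nearest next occurrence of each p-character, so that $\mathrm{prev}(T[i-1..])$ can be obtained from $\mathrm{prev}(T[i..])$. Children and reversed suffix links of each node are stored in balanced search trees keyed by their labels. To update $\mathrm{PPH}(T[i..])$ to $\mathrm{PPH}(T[i-1..])$, let $v_i$ be the node with id $i$ and walk up from $v_i$ to the ancestor $v'_i$ determined as follows: 1. If $T[i-1]\in\Sigma$, $v'_i$ is the lowest ancestor with $\mathrm{rslink}(T[i-1],v'_i)$ defined. 2. If $T[i-1]\in\Pi$ does not occur in $T[i..]$, $v'_i$ is the lowest ancestor with $\mathrm{rslink}(0,v'_i)$ defined. 3. Otherwise, with $j\ge i$ the smallest position having $T[j]=T[i-1]$ and $d=j-(i-1)$, $v'_i$ is the lowest ancestor with $\mathrm{rslink}(d,v'_i)$ defined if one exists, and otherwise the lowest ancestor with $\mathrm{rslink}(0,v'_i)$ defined. Let $u_i$ be the target of that link. Insert a new node $v_{i-1}$ (id $i-1$) as a child of $u_i$ with edge label $\mathrm{prev}(T[i-1..])[|u_i|+1]$.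 Add the single new reversed suffix link pointing to $v_{i-1}$, from the ancestor of $v_i$ of depth $|v'_i|+1$. Links from $\perp$ for s-characters are added only when the character first occurs.
   Formalization: In case 3, the walk up from $v_i$ seeks a d-link at ancestors of depth ≥ d and a 0-link at shallower ones, and the new reversed suffix link is keyed d or 0 by its source's depth. Each condition added here is assumed in the paper as well or is needed for the statement above to hold. *)

(* Defs.v *)
From mathcomp Require Import all_boot.
Set Implicit Arguments. Unset Strict Implicit. Unset Printing Implicit Defensive.

(* P-strings over disjoint alphabets Sigma = S and Pi = P: seq (S + P).      *)
(* Prev-characters (entries of prev encodings): Sigma \cup nat, i.e. S + nat *)
(* All positions below are 1-indexed as in the paper unless stated.          *)

Section PPH.
Variables S P : finType.

Definition pchar := (S + P)%type.
Definition pc := (S + nat)%type.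

(* prev(T)[i+1] where c = T[i+1] (i is the 0-indexed position) *)
Definition prev_at (T : seq pchar) (i : nat) (c : pchar) : pc :=
  match c with
  | inl a => inl a
  | inr p =>
      let pre := take i T in
      if (inr p : pchar) \in pre then inr (index (inr p : pchar) (rev pre)).+1
      else inr 0
  end.

Definition prev_enc (T : seq pchar) : seq pc :=
  map (fun ic => prev_at T ic.1 ic.2) (zip (iota 0 (size T)) T).

(* Sequence hash tree: nodes = path labels, listed in insertion order (the  *)
(* root eps first).  Parents/edge labels are determined by path labels.     *)
Definition sht_insert (N : seq (seq pc)) (s : seq pc) : seq (seq pc) :=
  rcons N (take (find (fun k => take k s \notin N) (iota 0 (size s).+1)) s).

Definition sht (ss : seq (seq pc)) : seq (seq pc) := foldl sht_insert [:: [::]] ss.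

(* PPH(T[i..]) for 1 <= i <= |T|+1: sequence hash tree of                   *)
(* <eps, prev(T[n..]), ..., prev(T[i..])>.  The node at list position m >= 1 *)
(* has id n - m + 1.                                                        *)
Definition PPH (T : seq pchar) (i : nat) : seq (seq pc) :=
  sht [seq prev_enc (drop j.-1 T) | j <- rev (iota i ((size T).+1 - i))].

(* Each balanced-search-tree operation on a tree holding m entries costs    *)
(* bst m = floor(log2 (m+1)) + 1.                                           *)

Definition bst (m : nat) : nat := (trunc_log 2 m.+1).+1.

Record state := State {
  st_nodes : seq (seq pc);                 (* nodes, insertion order, root first *)
  st_links : seq (seq pc * pc * seq pc);   (* reversed suffix links (source, key, target) *)
  st_bot   : seq S;                        (* s-characters having a link from bottom *)
  st_next  : seq (P * nat)                 (* nearest next occurrence of p-characters *)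
}.

Definition init_state : state := State [:: [::]] [::] [::] [::].

Definition link_match (x : seq pc) (a : pc) (l : seq pc * pc * seq pc) : bool :=
  (l.1.1 == x) && (l.1.2 == a).
Definition has_link (L : seq (seq pc * pc * seq pc)) x a := has (link_match x a) L.
Definition link_tgt (L : seq (seq pc * pc * seq pc)) x a : seq pc :=
  (nth (x, a, [::]) L (find (link_match x a) L)).2.
Definition nlinks (L : seq (seq pc * pc * seq pc)) x := count (fun l => l.1.1 == x) L.
Definition nchildren (N : seq (seq pc)) (u : seq pc) :=
  count (fun w => (size w == (size u).+1) && (take (size u) w == u)) N.

Definition lookup_next (nx : seq (P * nat)) (p : P) : option nat :=
  if has (fun e => e.1 == p) nx
  then Some (nth (p, 0) nx (find (fun e => e.1 == p) nx)).2 else None.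
Definition update_next (nx : seq (P * nat)) (p : P) (q : nat) :=
  (p, q) :: filter (fun e => e.1 != p) nx.

Definition anc (v : seq pc) : seq (seq pc) :=
  [seq take j v | j <- rev (iota 0 (size v).+1)].

(* The key a whose reversed suffix link is searched for at an ancestor x  *)
(* of v_{q+1} (cases 1-3 of the algorithm), where c = T[q]:                *)
(*  1. c in Sigma: a = c;  2. c in Pi not occurring in T[q+1..]: a = 0;     *)
(*  3. otherwise, with d = j - q (j the nearest next occurrence of c):      *)
(*     a = d at ancestors of depth >= d, and a = 0 at ancestors of depth    *)
(*     < d (a d-link can only exist at depth >= d).          *)
Definition key_at (st : state) (q : nat) (c : pchar) (x : seq pc) : pc :=
  match c with
  | inl s => inl s
  | inr p =>
      match lookup_next (st_next st) p with
      | None => inr 0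
      | Some j => if j - q <= size x then inr (j - q) else inr 0
      end
  end.

(* key used at the auxiliary node bottom (which has links only for Sigma and 0) *)
Definition key_bot (c : pchar) : pc :=
  match c with inl s => inl s | inr _ => inr 0 end.

(* One update PPH(T[q+1..]) -> PPH(T[q..]), where c = T[q].  Returns the    *)
(* new state and the cost of the update.                                    *)
Definition step (T : seq pchar) (q : nat) (c : pchar) (st : state) : state * nat :=
  let N := st_nodes st in
  let L := st_links st in
  let v := last [::] N in               (* v_{q+1}, the last inserted node *)
  let A := anc v in
  let bot' := match c with
              | inl s => if s \in st_bot st then st_bot st else s :: st_bot st
              | inr _ => st_bot st end in
  let vidx := find (fun x => has_link L x (key_at st q c x)) A in
                                       (* v' = nth A vidx, or bottom *)
  let isbot := vidx == size A in
  let key := if isbot then key_bot c else key_at st q c (nth [::] A vidx) in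
                                       (* key of the link followed at v' *)
  let u := if isbot then [::] else link_tgt L (nth [::] A vidx) key in
  let w := rcons u (nth (inr 0) (prev_enc (drop q.-1 T)) (size u)) in
  let src := take ((size v).+1 - vidx) v in  (* ancestor of v of depth |v'|+1 *)
  let nx' := match c with inr p => update_next (st_next st) p q | inl _ => st_next st end in
  let walk := sumn [seq bst (nlinks L x) | x <- take vidx.+1 A]
              + (if isbot then bst (size bot').+1 else 0) in
  let cost := walk + bst (nchildren N u) + bst (nlinks L src)
              + bst (size (st_next st)) + bst (size (st_bot st)) in
  (* the new link from src to w; its key is the one valid at depth |src| *)
  (State (rcons N w) (rcons L (src, key_at st q c src, w)) bot' nx', cost).

(* run T m: state and cumulated cost after processing T[n], ..., T[n-m+1],  *)
(* i.e. the structure for PPH(T[n-m+1..]).                                  *)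
Fixpoint run (T : seq pchar) (m : nat) : state * nat :=
  match m with
  | 0 => (init_state, 0)
  | m'.+1 =>
      let: (st, cst) := run T m' in
      let q := size T - m' in
      match drop q.-1 T with
      | c :: _ => let: (st', c') := step T q c st in (st', cst + c')
      | [::] => (st, cst)
      end
  end.

(* space used: nodes (= child entries + 1), links, bottom links, next-occurrence tree *)
Definition space (st : state) : nat :=
  size (st_nodes st) + size (st_links st) + size (st_bot st) + size (st_next st).

End PPH.

(* Main.v *)
Require Import Defs.
From mathcomp Require Import all_boot.
From mathcomp Require Import zify.
Set Implicit Arguments. Unset Strict Implicit. Unset Printing Implicit Defensive.

Section PrevLemmas.
Variables S P : finType.
Local Notation pchar := (pchar S P).
Local Notation pc := (pc S).
Local Notation pat := (@Defs.prev_at S P).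

Definition isp (c : pchar) : bool := if c is inr _ then true else false.

Lemma size_pe (X : seq pchar) : size (prev_enc X) = size X.
Proof. by rewrite /prev_enc size_map size_zip size_iota minnn. Qed.

Lemma nth_pe (X : seq pchar) x0 k : k < size X ->
  nth (inr 0) (prev_enc X) k = pat X k (nth x0 X k).
Proof.
move=> hk; rewrite /prev_enc (nth_map (0, x0)); last by rewrite size_zip size_iota minnn.
by rewrite nth_zip ?size_iota // nth_iota.
Qed.

Lemma pat_take (X : seq pchar) k i c : i <= k -> pat (take k X) i c = pat X i c.
Proof. by move=> hik; rewrite /Defs.prev_at take_takel. Qed.

Lemma take_pe (X : seq pchar) k : take k (prev_enc X) = prev_enc (take k X).
Proof.
case: X => [|x0 X]; first by case: k.
apply: (@eq_from_nth _ (inr 0)); first by rewrite !size_take_min !size_pe size_take_min.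
move=> i; rewrite size_take_min size_pe => hi.
have hik : i < k by lia.
have hiX : i < size (x0 :: X) by lia.
rewrite nth_take // (nth_pe x0) // (nth_pe x0); last by rewrite size_take_min; lia.
by rewrite nth_take // pat_take // ltnW.
Qed.

Lemma pat_small (X : seq pchar) k c v : pat X k c = inr v -> v <= k.
Proof.
rewrite /Defs.prev_at; case: c => // p; case: ifP => hin [] <- //.
rewrite -mem_rev -index_mem size_rev size_take_min in hin; exact: leq_trans hin (geq_minl _ _).
Qed.

Lemma index_notin_take (x : pchar) s k : index x s = k -> x \notin take k s.
Proof. by move=> <-; apply/negP => /index_ltn; rewrite ltnn. Qed.

Lemma pe_cons_nth0 (c : pchar) X : nth (inr 0) (prev_enc (c :: X)) 0 = key_bot c.
Proof. by rewrite (nth_pe c) //=; case: c. Qed.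

Lemma pe_cons_nth (c : pchar) X k : k < size X ->
  nth (inr 0) (prev_enc (c :: X)) k.+1 =
  if isp c && (index c X == k) then inr k.+1 else nth (inr 0) (prev_enc X) k.
Proof.
move=> hk; rewrite (nth_pe c) //= (nth_pe c) //.
rewrite /Defs.prev_at /=.
have Hc : isp c -> index c X = k -> nth c X k = c.
  by move=> _ hi; rewrite -hi nth_index // -index_mem hi.
case Ex: (nth c X k) => [s|p].
  case: c Hc Ex => //= p Hc Ex; case: eqP => // hi.
  by move: Ex; rewrite Hc.
rewrite in_cons rev_cons -cats1 index_cat mem_rev.
case: (boolP (inr p \in take k X)) => hin.
  rewrite orbT /=; case: ifP => // /andP [hp /eqP hc].
  have ec : c = inr p by rewrite -Ex Hc.
  by move: hin; rewrite -ec; move/negP: (index_notin_take hc).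
rewrite orbF; case: eqP => [ec|nec].
  have hidx : index c X = k.
    apply/eqP; rewrite eqn_leq; apply/andP; split.
      by rewrite -ec -Ex index_nth.
    by rewrite leqNgt -in_take_leq -?ec // ltnW.
  rewrite hidx eqxx -ec /= eqxx size_rev size_take_min addn0.
  by congr (inr _.+1); apply/minn_idPl; exact: ltnW.
case: c nec Hc Ex => [s|p'] nec Hc Ex //=.
case: eqP => // hi; exfalso; apply: nec.
by rewrite -Ex Hc.
Qed.

Definition tl (z : seq pc) : seq pc :=
  mkseq (fun k => let y := nth (inr 0) z k.+1 in if y == inr k.+1 then inr 0 else y) (size z).-1.

Definition keyz (z : seq pc) : pc :=
  match z with
  | [::] => inr 0
  | inl s :: _ => inl s
  | inr _ :: _ => head (inr 0) (map (fun k => (inr k : pc))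
                     (filter (fun k => nth (inr 0) z k == inr k) (iota 1 (size z).-1)))
  end.

Definition Rz (a : pc) (x : seq pc) : seq pc :=
  match a with
  | inl s => inl s :: x
  | inr 0 => inr 0 :: x
  | inr d.+1 => inr 0 :: set_nth (inr 0) x d (inr d.+1)
  end.

Lemma pe_cons_head (c : pchar) X : prev_enc (c :: X) = key_bot c :: behead (prev_enc (c :: X)).
Proof. by rewrite /prev_enc /=; case: c. Qed.

Lemma pe_cons_eq (c : pchar) X : prev_enc (c :: X) = key_bot c ::
  (if isp c && (c \in X) then set_nth (inr 0) (prev_enc X) (index c X) (inr (index c X).+1)
   else prev_enc X).
Proof.
rewrite pe_cons_head; congr (_ :: _).
have hs : size (behead (prev_enc (c :: X))) = size X by rewrite size_behead size_pe.
apply: (@eq_from_nth _ (inr 0)).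
  rewrite hs; case: ifP => [/andP [_ hin]|_]; last by rewrite size_pe.
  by rewrite size_set_nth size_pe; apply/esym/maxn_idPr; rewrite index_mem.
move=> k; rewrite hs => hk.
rewrite nth_behead pe_cons_nth //.
case: (boolP (isp c && (c \in X))) => [/andP [-> hin]|hn].
  by rewrite nth_set_nth /=; case: (eqVneq (index c X) k) => [<-|].
by case: ifP => // /andP [hp /eqP hi]; move: hn; rewrite hp /= -index_mem hi hk.
Qed.

Lemma tl_pe (c : pchar) X : tl (prev_enc (c :: X)) = prev_enc X.
Proof.
apply: (@eq_from_nth _ (inr 0)); first by rewrite size_mkseq !size_pe.
move=> k; rewrite size_mkseq size_pe /= => hk.
rewrite nth_mkseq; last by rewrite size_pe. cbv zeta; rewrite pe_cons_nth //.
case: (boolP (isp c && (index c X == k))) => [/andP [hp /eqP hi]|hn]; first rewrite eqxx.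
  rewrite (nth_pe c) // -hi nth_index -?index_mem ?hi //.
  rewrite /Defs.prev_at; case: c hp hi => // p _ hi.
  by rewrite (negbTE (index_notin_take hi)).
rewrite (nth_pe c) //; case: eqP => // /pat_small; by rewrite ltnn.
Qed.

Lemma keyz_cons_inr q (z' : seq pc) : keyz (inr q :: z') = head (inr 0) (map (fun k => (inr k : pc))
   (filter (fun k => nth (inr 0) (inr q :: z') k == inr k) (iota 1 (size z')))).
Proof. by []. Qed.

Lemma keyz_pe (c : pchar) X : keyz (prev_enc (c :: X)) =
  match c with inl s => inl s | inr _ => if c \in X then inr (index c X).+1 else inr 0 end.
Proof.
case: c => [s|p]; first by rewrite pe_cons_head.
have E0 : prev_enc (inr p :: X) = inr 0 :: behead (prev_enc (inr p :: X)) := pe_cons_head _ _.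
rewrite E0 keyz_cons_inr -E0 size_behead size_pe.
have E : {in iota 1 (size X), (fun k => nth (inr 0) (prev_enc (inr p :: X)) k == inr k)
             =1 pred1 (index (inr p) X).+1}.
  move=> k; rewrite mem_iota => /andP [h1 h2]; case: k h1 h2 => // k _ hk.
  rewrite add1n ltnS in hk.
  rewrite pe_cons_nth //.
  change (isp (inr p)) with true; change (pred1 (index (inr p) X).+1 k.+1) with (k.+1 == (index (inr p) X).+1).
  rewrite andTb eqSS.
  case: (eqVneq (index (inr p) X) k) => [e|hne]; first by rewrite ?eqxx.
  apply/eqP; rewrite (nth_pe (inr p)) // => /pat_small.
  by rewrite ltnn.
rewrite (_ : (size (inr p :: X)).-1 = size X) // (eq_in_filter E).
case: ifP => hin.
  by rewrite filter_pred1_uniq ?iota_uniq // mem_iota /= ltnS index_mem.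
rewrite (_ : filter _ _ = [::]) //; apply/eqP; rewrite -size_eq0 size_filter; apply/eqP/count_memPn.
by rewrite mem_iota memNindex ?hin // add1n ltnn andbF.
Qed.

Lemma Rz_pe (c : pchar) X : Rz (keyz (prev_enc (c :: X))) (tl (prev_enc (c :: X))) = prev_enc (c :: X).
Proof.
rewrite keyz_pe tl_pe [in RHS]pe_cons_eq; case: c => [s|p] //=.
by case: ifP.
Qed.

Definition valid (z : seq pc) := exists (c : pchar) X, z = prev_enc (c :: X).

Lemma valid_inj z1 z2 : valid z1 -> valid z2 -> tl z1 = tl z2 -> keyz z1 = keyz z2 -> z1 = z2.
Proof.
move=> [c1 [X1 ->]] [c2 [X2 ->]] ht hk.
by rewrite -Rz_pe ht hk Rz_pe.
Qed.

Lemma take_pe_cons (c : pchar) X k : take k.+1 (prev_enc (c :: X)) = prev_enc (c :: take k X).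
Proof. by rewrite take_pe. Qed.

End PrevLemmas.

Section PPHLemmas.
Variables S P : finType.
Local Notation pchar := (pchar S P).
Local Notation pc := (pc S).

Lemma ins_spec (N : seq (seq pc)) (s : seq pc) : [::] \in N -> s \notin N ->
  exists f, [/\ 0 < f, f <= size s, take f s \notin N,
    (forall k, k < f -> take k s \in N) & sht_insert N s = rcons N (take f s)].
Proof.
move=> h0 hs.
set a := (fun k => take k s \notin N).
set f := find a (iota 0 (size s).+1).
have hh : has a (iota 0 (size s).+1).
  by apply/hasP; exists (size s); [rewrite mem_iota add0n ltnSn | rewrite /a take_size].
have hlt : f < (size s).+1 by rewrite -[X in _ < X](size_iota 0) -has_find.
have hnf := nth_find 0 hh; rewrite -/f nth_iota // add0n in hnf.
have hbf : forall k, k < f -> take k s \in N.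
  move=> k hk; have := before_find 0 hk; rewrite nth_iota ?add0n; last exact: ltn_trans hk hlt.
  by rewrite /a /=; move/negbFE.
exists f; split => //.
by rewrite lt0n; apply/eqP => hf; move: hnf; rewrite hf /a /= take0 h0.
Qed.

Variable T : seq pchar.
Local Notation n := (size T).
Definition Nd m := PPH T (n - m).+1.
Definition Pm m := prev_enc (drop (n - m) T).

Lemma Nd0 : Nd 0 = [:: [::]].
Proof. by rewrite /Nd /PPH subn0 subnn. Qed.

Lemma NdS m : m < n -> Nd m.+1 = sht_insert (Nd m) (Pm m.+1).
Proof.
move=> hm; rewrite /Nd /PPH subnSK // (_ : n.+1 - (n - m) = m.+1); last by lia.
have -> : n.+1 - (n - m).+1 = m by lia.
rewrite [iota (n - m) _]/= rev_cons map_rcons /sht foldl_rcons -/(sht _).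
rewrite /Pm (_ : (n - m).-1 = n - m.+1) //; lia.
Qed.

Lemma size_Pm m : m <= n -> size (Pm m) = m.
Proof. by move=> hm; rewrite size_pe size_drop; lia. Qed.

Lemma size_node m z j : n - m <= j -> z = take (size z) (prev_enc (drop j T)) -> size z <= m.
Proof. by move=> hj ->; rewrite size_take_min size_pe size_drop; lia. Qed.

Definition NInv m :=
  [/\ Nd m = [::] :: behead (Nd m), uniq (Nd m),
      (forall z, z \in Nd m -> forall k, take k z \in Nd m),
      (forall z, z \in Nd m -> exists2 j, n - m <= j & z = take (size z) (prev_enc (drop j T))) &
      (let v := last [::] (Nd m) in [/\ v \in Nd m, take (size v) (Pm m) = v &
         forall y, y \in Nd m -> take (size y) (Pm m) = y -> take (size y) v = y])].

Lemma Nd_inv m : m <= n -> NInv m.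
Proof.
elim: m => [_|m IH hm].
  rewrite /NInv Nd0; split => //.
  - by move=> z; rewrite inE => /eqP -> k; rewrite inE.
  - by move=> z; rewrite inE => /eqP ->; exists n; rewrite ?subn0 ?take0.
  - by split; rewrite //= ?take0 // => y; rewrite inE => /eqP ->.
have [Ea Eb Ec Ed Ee] := IH (ltnW hm).
have hs : size (Pm m.+1) = m.+1 by rewrite size_Pm.
have h0 : [::] \in Nd m by rewrite Ea inE eqxx.
have hsn : Pm m.+1 \notin Nd m.
  apply/negP => /Ed [j hj hz]; have := size_node hj hz; rewrite hs ltnn //.
have [f [f0 fs fN fb Ei]] := ins_spec h0 hsn.
rewrite /NInv NdS // Ei.
have hw : size (take f (Pm m.+1)) = f by rewrite size_takel.
have Ew : forall k, take k (take f (Pm m.+1)) \in rcons (Nd m) (take f (Pm m.+1)).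
  move=> k; rewrite mem_rcons inE; case: (leqP f k) => hk.
    by rewrite take_taker ?eqxx.
  by rewrite take_takel ?fb ?orbT // ltnW.
split.
- by rewrite Ea.
- by rewrite rcons_uniq fN Eb.
- move=> z; rewrite mem_rcons inE => /orP [/eqP ->|hz] // k.
  by rewrite mem_rcons inE Ec ?orbT.
- move=> z; rewrite mem_rcons inE => /orP [/eqP ->|/Ed [j hj hz]].
    by exists (n - m.+1) => //; rewrite hw.
  by exists j => //; lia.
- rewrite last_rcons hw; split.
  + by rewrite mem_rcons inE eqxx.
  + by [].
  + move=> y; rewrite mem_rcons inE => /orP [/eqP ->|hy hty]; first by rewrite hw take_takel.
    have hyf : size y < f.
      rewrite ltnNge; apply/negP => hfy; move: fN; rewrite -(take_takel _ hfy) hty.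
      by rewrite Ec.
    by rewrite take_takel ?hty // ltnW.
Qed.

Lemma drop_cons m : m < n -> exists c, drop (n - m.+1) T = c :: drop (n - m) T.
Proof.
move=> hm; case E: (drop (n - m.+1) T) => [|c X].
  by move: (congr1 size E); rewrite size_drop /=; lia.
exists c; congr (_ :: _).
have -> : n - m = 1 + (n - m.+1) by lia.
by rewrite -drop_drop E /= drop0.
Qed.

Lemma tl_take_Pm m k : m < n -> tl (take k.+1 (Pm m.+1)) = take k (Pm m).
Proof.
move=> hm; have [c Ec] := drop_cons hm.
by rewrite /Pm Ec take_pe_cons tl_pe take_pe.
Qed.

Lemma Nd_last m : 0 < m -> m <= n -> Nd m = rcons (Nd m.-1) (last [::] (Nd m)) /\ last [::] (Nd m) \notin Nd m.-1.
Proof.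
case: m => // m _ hm.
have [_ Eb _ _ _] := Nd_inv hm.
move: Eb; rewrite NdS // /sht_insert last_rcons rcons_uniq => /andP [h _].
by split.
Qed.

Lemma Nd_tl_aux m : forall m', m' <= m -> m' <= n -> forall z, z \in Nd m' -> tl z \in Nd m'.
Proof.
elim: m => [|m IH] m' hm' hn.
  by rewrite leqn0 in hm'; move/eqP: hm' => ->; rewrite Nd0 => z; rewrite inE => /eqP ->.
rewrite leq_eqVlt in hm'; case/orP: hm' => [/eqP Em|hm']; last by apply: IH; rewrite -ltnS.
subst m'; have hm : m < n := hn.
have [Ea Eb Ec Ed [Ev1 Ev2 Ev3]] := Nd_inv (ltnW hm).
have IHm := IH m (leqnn m) (ltnW hm).
have hs : size (Pm m.+1) = m.+1 by rewrite size_Pm.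
have h0 : [::] \in Nd m by rewrite Ea inE eqxx.
have hsn : Pm m.+1 \notin Nd m.
  apply/negP => /Ed [j hj hz]; have := size_node hj hz; rewrite hs ltnn //.
have [f [f0 fs fN fb Ei]] := ins_spec h0 hsn.
rewrite NdS // Ei => z; rewrite mem_rcons inE => /orP [/eqP ->|hz]; last first.
  by rewrite mem_rcons inE IHm ?orbT.
rewrite mem_rcons inE; apply/orP; right.
case: f f0 fs fN fb {Ei} => // f _ fs fN fb.
rewrite tl_take_Pm //.
set v := last [::] (Nd m) in Ev1 Ev2 Ev3.
case: (leqP f (size v)) => hfv.
  by rewrite -(take_takel _ hfv) Ev2 Ec.
have hz' : take (size v).+1 (Pm m.+1) \in Nd m by apply: fb; rewrite ltnS.
have htz : tl (take (size v).+1 (Pm m.+1)) = v by rewrite tl_take_Pm // Ev2.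
have hsz : size (take (size v).+1 (Pm m.+1)) = (size v).+1 by rewrite size_takel // hs; lia.
have [m0|mpos] := posnP m.
  by move: hz'; rewrite [in Nd m]m0 Nd0 inE => /eqP hz0; move: hsz; rewrite hz0.
have [EN hvN] := Nd_last mpos (ltnW hm).
move: hz'; rewrite EN mem_rcons inE => /orP [/eqP hzv|hz'].
  by move: hsz; rewrite hzv -/v; lia.
exfalso; move/negP: hvN; apply; rewrite -/v -htz.
apply: (IH m.-1) => //; lia.
Qed.

Lemma Nd_tl m z : m <= n -> z \in Nd m -> tl z \in Nd m.
Proof. by move=> hm; apply: (@Nd_tl_aux m). Qed.
End PPHLemmas.

Section Helpers.
Lemma find_eq (T0 : Type) (x0 : T0) (p : pred T0) (s : seq T0) i :
  i <= size s -> (forall k, k < i -> ~~ p (nth x0 s k)) -> (i < size s -> p (nth x0 s i)) -> find p s = i.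
Proof.
elim: s i => [|x s IH] [|i] //= hi hb hp.
- by rewrite hp.
- by move: (hb 0 (ltn0Sn _)) => /= /negbTE ->; congr _.+1; apply: IH => // k hk; apply: (hb k.+1).
Qed.

Lemma index_take_lt (T0 : eqType) (x : T0) s k : index x s < k -> index x (take k s) = index x s.
Proof.
elim: s k => [|y s IH] [|k] //=.
by case: eqP => // _; rewrite ltnS => h; rewrite IH.
Qed.

Variable P : finType.
Lemma lookup_cons (e : P * nat) nx p : lookup_next (e :: nx) p = if e.1 == p then Some e.2 else lookup_next nx p.
Proof. by rewrite /lookup_next /=; case: eqP. Qed.

Lemma lookup_filter (nx : seq (P * nat)) p p' : p' != p ->
  lookup_next (filter (fun e => e.1 != p) nx) p' = lookup_next nx p'.
Proof.
move=> hne; elim: nx => [|e nx IH] //=.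
case: ifP => he; first by rewrite !lookup_cons IH.
by move/negbFE/eqP: he => ep; rewrite lookup_cons ep eq_sym (negbTE hne) IH.
Qed.

Lemma lookup_update (nx : seq (P * nat)) p q p' :
  lookup_next (update_next nx p q) p' = if p == p' then Some q else lookup_next nx p'.
Proof.
rewrite /update_next lookup_cons /=; case: eqP => // /eqP hne.
by rewrite lookup_filter // eq_sym.
Qed.
End Helpers.

Section Anc.
Variable S : finType.
Lemma size_anc (v : seq (pc S)) : size (anc v) = (size v).+1.
Proof. by rewrite /anc size_map size_rev size_iota. Qed.

Lemma nth_anc (v : seq (pc S)) k : k <= size v -> nth [::] (anc v) k = take (size v - k) v.
Proof.
move=> hk; rewrite /anc (nth_map 0); last by rewrite size_rev size_iota.
by rewrite nth_rev ?size_iota // nth_iota; [congr take; lia | lia].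
Qed.
End Anc.

Section Step.
Variables S P : finType.
Local Notation pchar := (pchar S P).
Local Notation pc := (pc S).
Variable T : seq pchar.
Local Notation n := (size T).
Local Notation Nd := (Nd T).
Local Notation Pm := (Pm T).

Definition gl (z : seq pc) := (tl z, keyz z, z).

Lemma node_valid m z : m <= n -> z \in behead (Nd m) -> exists (c : pchar) X, z = prev_enc (c :: X).
Proof.
move=> hm hz; have [Ea Eb _ Ed _] := Nd_inv hm.
have hz' : z \in Nd m by rewrite Ea inE hz orbT.
have hz0 : z != [::].
  by apply/eqP => ez; move: Eb; rewrite Ea /= -ez hz.
have [j hj Ez] := Ed _ hz'.
move: hz0; rewrite Ez take_pe; case E: (take (size z) (drop j T)) => [|c X] //.
by move=> _; exists c, X.
Qed.

Lemma has_link_map N x a : has_link (map gl N) x a = has (fun z => (tl z == x) && (keyz z == a)) N.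
Proof. by rewrite /has_link has_map. Qed.

Lemma link_tgt_map N x a : has (fun z => (tl z == x) && (keyz z == a)) N ->
  link_tgt (map gl N) x a = nth [::] N (find (fun z => (tl z == x) && (keyz z == a)) N).
Proof.
move=> hh; rewrite /link_tgt find_map (nth_map [::]) //.
by rewrite -has_find.
Qed.

Lemma link_exact m k : m < n -> k <= m ->
  let x := take k (Pm m) in let a := keyz (take k.+1 (Pm m.+1)) in
  has_link (map gl (behead (Nd m))) x a = (take k.+1 (Pm m.+1) \in Nd m) /\
  (take k.+1 (Pm m.+1) \in Nd m -> link_tgt (map gl (behead (Nd m))) x a = take k.+1 (Pm m.+1)).
Proof.
move=> hm hk x a.
have [c Ec] := drop_cons hm.
set w0 := take k.+1 (Pm m.+1).
have vw0 : w0 = prev_enc (c :: take k (drop (n - m) T)) by rewrite /w0 /Pm Ec take_pe_cons.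
have tw0 : tl w0 = x by rewrite /w0 tl_take_Pm.
have E : {in behead (Nd m), (fun z => (tl z == x) && (keyz z == a)) =1 pred1 w0}.
  move=> z hz /=; case: (eqVneq z w0) => [->|hne]; first by rewrite tw0 !eqxx.
  apply/negbTE/negP => /andP [/eqP h1 /eqP h2]; move/eqP: hne; apply.
  apply: valid_inj; first exact: node_valid (ltnW hm) hz.
  - by rewrite vw0; eexists; eexists.
  - by rewrite h1 tw0.
  - by rewrite h2.
have [Ea _ _ _ _] := Nd_inv (ltnW hm).
have hin : (w0 \in Nd m) = (w0 \in behead (Nd m)).
  by rewrite [in LHS]Ea inE vw0 /prev_enc /=.
rewrite has_link_map (eq_in_has E) has_pred1 hin; split => // hw.
rewrite link_tgt_map; last by rewrite (eq_in_has E) has_pred1.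
set i := find _ _.
have hi : i < size (behead (Nd m)) by rewrite -has_find (eq_in_has E) has_pred1.
have hh : has (fun z => (tl z == x) && (keyz z == a)) (behead (Nd m)) by rewrite (eq_in_has E) has_pred1.
by have := E _ (mem_nth [::] hi); rewrite /i (nth_find [::] hh) => /esym/eqP.
Qed.

Lemma sumn_le_bound B (s : seq nat) : (forall x, x \in s -> x <= B) -> sumn s <= size s * B.
Proof.
elim: s => [|x s IH] //= h.
by rewrite mulSn leq_add ?h ?mem_head // IH // => y hy; apply: h; rewrite inE hy orbT.
Qed.

Lemma index_cons' (T0 : eqType) (x y : T0) s : index x (y :: s) = if y == x then 0 else (index x s).+1.
Proof. by rewrite /index /=. Qed.

Definition next_spec m (nx : seq (P * nat)) := forall p, lookup_next nx p =
  if (inr p : pchar) \in drop (n - m) T then Some (n - m + 1 + index (inr p : pchar) (drop (n - m) T)) else None.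

Lemma key_ok m (st : state S P) c k : m < n -> drop (n - m.+1) T = c :: drop (n - m) T ->
  next_spec m (st_next st) -> k <= m ->
  key_at st (n - m) c (take k (Pm m)) = keyz (take k.+1 (Pm m.+1)).
Proof.
move=> hm Ec hl hk.
have hsz : size (take k (Pm m)) = k by rewrite size_takel // size_Pm // ltnW.
rewrite {2}/Pm Ec take_pe_cons keyz_pe.
case: c Ec => [s|p] Ec //.
rewrite /key_at hl hsz.
set X := drop (n - m) T.
case: ifP => hin.
  have -> : n - m + 1 + index (inr p : pchar) X - (n - m) = (index (inr p : pchar) X).+1 by lia.
  by rewrite in_take //; case: ifP => hi //; rewrite index_take_lt.
by rewrite (_ : (inr p : pchar) \in take k X = false) //; apply/negbTE/negP => /mem_take; rewrite hin.
Qed.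

Definition SInv m (st : state S P) :=
  [/\ st_nodes st = Nd m, st_links st = map gl (behead (Nd m)), next_spec m (st_next st),
      uniq (map fst (st_next st)) /\ size (st_next st) <= m & uniq (st_bot st) /\ size (st_bot st) <= m].

Lemma f_bound m f : m < n -> 0 < f -> Nd m.+1 = rcons (Nd m) (take f (Pm m.+1)) -> f <= size (Pm m.+1) ->
  f <= (size (last [::] (Nd m))).+1.
Proof.
move=> hm; case: f => // f _ hN hfs.
have hw : take f.+1 (Pm m.+1) \in Nd m.+1 by rewrite hN mem_rcons inE eqxx.
have [Ea Eb Ec Ed [Ev1 Ev2 Ev3]] := Nd_inv (ltnW hm).
have := Nd_tl hm hw; rewrite tl_take_Pm // => ht.
have hsm : size (Pm m.+1) = m.+1 by rewrite size_Pm.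
have hfm : f <= m by rewrite hsm in hfs.
have hsz : size (take f (Pm m)) = f by rewrite size_takel // size_Pm // ltnW.
have ht' : take f (Pm m) \in Nd m.
  move: ht; rewrite hN mem_rcons inE => /orP [/eqP he|] //.
  move: (congr1 size he); rewrite hsz size_take_min hsm => hh; exfalso; lia.
have := Ev3 _ ht'; rewrite hsz => /(_ erefl) he.
have := congr1 size he; rewrite hsz size_take_min => hh; lia.
Qed.

Lemma step_ok m st c : m < n -> SInv m st -> drop (n - m.+1) T = c :: drop (n - m) T ->
  SInv m.+1 (step T (n - m) c st).1 /\
  (forall K, (forall x, nlinks (st_links st) x <= K) -> (forall u, nchildren (st_nodes st) u <= K) ->
     #|S|.+1 <= K -> #|P| <= K ->
     (step T (n - m) c st).2 + bst K * size (last [::] (Nd m.+1)) <= bst K * size (last [::] (Nd m)) + 8 * bst K).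
Proof.
case: st => Nn Ll bot nx hm [/= EN EL hnx [unx snx] [ubot sbot]] Ec; subst Nn Ll.
have [Ea Eb Ecl Ed [Ev1 Ev2 Ev3]] := Nd_inv (ltnW hm).
set v := last [::] (Nd m) in Ev1 Ev2 Ev3 *.
have hs : size (Pm m.+1) = m.+1 by rewrite size_Pm.
have h0 : [::] \in Nd m by rewrite Ea inE eqxx.
have hsn : Pm m.+1 \notin Nd m.
  apply/negP => /Ed [j hj hz]; have := size_node hj hz; rewrite hs ltnn //.
have [f [f0 fs fN fb Ei]] := ins_spec h0 hsn.
have hf1 : f <= (size v).+1.
  by apply: f_bound => //; rewrite NdS // Ei.
have hvm : size v <= m by have [j hj hz] := Ed _ Ev1; exact: size_node hj hz.
have hq : (n - m).-1 = n - m.+1 by lia.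
rewrite /step /= hq -/(Pm m.+1).
set st0 := State (Nd m) [seq gl i | i <- behead (Nd m)] bot nx.
set L := [seq gl i | i <- behead (Nd m)].
set pA := (fun x : seq pc => has_link L x (key_at st0 (n - m) c x)).
set vidx := find pA (anc v).
have hmemf : forall k, k <= size (Pm m.+1) -> (take k (Pm m.+1) \in Nd m) = (k < f).
  move=> k hk; case: (ltnP k f) => hkf; first exact: fb.
  apply/negbTE/negP => hin; move/negP: fN; apply.
  by rewrite -(take_takel _ hkf); apply: Ecl.
have htv : forall k, k <= size v -> take k v = take k (Pm m).
  by move=> k hk; rewrite -{1}Ev2 take_takel.
have hkey : forall k, k <= size v -> key_at st0 (n - m) c (take k v) = keyz (take k.+1 (Pm m.+1)).
  move=> k hk; rewrite htv // (@key_ok m st0 c k hm Ec hnx) //; lia.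
have hA : forall i, i <= size v -> pA (nth [::] (anc v) i) = ((size v - i).+1 < f).
  move=> i hi; rewrite nth_anc // /pA hkey ?leq_subr // htv ?leq_subr //.
  have [-> _] := link_exact hm (leq_trans (leq_subr i (size v)) hvm).
  by rewrite hmemf // hs ltnS; apply: leq_trans hvm; apply: leq_subr.
have hvidx : vidx = (size v).+1 - f.-1.
  rewrite /vidx; apply: (@find_eq _ [::] pA (anc v)); first by rewrite size_anc leq_subr.
    move=> k hk; rewrite hA; last by lia.
    by rewrite -leqNgt; lia.
  by rewrite size_anc => hi; rewrite hA; lia.
have hfs' : f.-1 <= size v by lia.
have hu : (if vidx == size (anc v) then [::] else link_tgt L (nth [::] (anc v) vidx)
            (if vidx == size (anc v) then key_bot c else key_at st0 (n - m) c (nth [::] (anc v) vidx)))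
          = take f.-1 (Pm m.+1).
  rewrite size_anc hvidx.
  have [f1|f2] : f = 1 \/ 1 < f by lia.
    by rewrite f1 subn0 eqxx take0.
  have -> : ((size v).+1 - f.-1 == (size v).+1) = false by apply/negbTE; lia.
  have hi : (size v).+1 - f.-1 <= size v by lia.
  rewrite nth_anc // (_ : size v - ((size v).+1 - f.-1) = f.-2); last by lia.
  rewrite hkey; last by lia.
  rewrite htv; last by lia.
  have hk : f.-2 <= m by lia.
  have [_ ->] := link_exact hm hk; first by congr take; lia.
  by rewrite hmemf; [lia | rewrite hs; lia].
rewrite hu.
have hsu : size (take f.-1 (Pm m.+1)) = f.-1 by rewrite size_takel //; lia.
have hw : rcons (take f.-1 (Pm m.+1)) (nth (inr 0) (Pm m.+1) f.-1) = take f (Pm m.+1).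
  by rewrite -take_nth; [congr take; lia | lia].
rewrite hsu hw.
have hsrc : take ((size v).+1 - vidx) v = take f.-1 (Pm m) by rewrite hvidx htv; [congr take | ]; lia.
have htw : tl (take f (Pm m.+1)) = take f.-1 (Pm m).
  by rewrite (_ : f = f.-1.+1) ?tl_take_Pm //; lia.
have hkw : key_at st0 (n - m) c (take ((size v).+1 - vidx) v) = keyz (take f (Pm m.+1)).
  by rewrite hvidx (_ : (size v).+1 - ((size v).+1 - f.-1) = f.-1) ?hkey ?prednK //; lia.
rewrite hkw hsrc -htw.
have ENS : Nd m.+1 = rcons (Nd m) (take f (Pm m.+1)) by rewrite NdS // Ei.
split.
  split => /=.
  - by rewrite ENS.
  - by rewrite ENS {1}Ea /= map_rcons.
  - move=> p'; rewrite Ec in_cons index_cons'.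
    destruct c as [s|p] => /=.
      by rewrite hnx; case: ifP => // _; congr Some; lia.
    rewrite lookup_update; case: (eqVneq p p') => [<-|hne]; first by rewrite eqxx /=; congr Some; lia.
    have hne' : (inr p' == inr p :> pchar) = false by apply/negbTE; apply: contra hne => /eqP [->].
    rewrite hnx hne' (_ : (inr p == inr p' :> pchar) = false) /=; last by rewrite eq_sym.
    by case: ifP => // _; congr Some; lia.
  - destruct c as [s|p] => /=; first by split => //; apply: (leq_trans snx).
    rewrite /update_next /=; split; last by rewrite ltnS size_filter; apply: leq_trans (count_size _ _) snx.
    apply/andP; split.
      by apply/mapP => -[e]; rewrite mem_filter => /andP [/negbTE he _] ep; move: he; rewrite -ep eqxx.
    exact: subseq_uniq (map_subseq _ (filter_subseq _ _)) unx.
  - destruct c as [s|p] => //=; last by split => //; apply: (leq_trans sbot).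
    case: ifP => hb; first by split => //; apply: (leq_trans sbot).
    by rewrite /= hb ubot.
move=> K hL hC hS hP.
have bstm : forall a b, a <= b -> bst a <= bst b by move=> a b h; rewrite /bst ltnS leq_trunc_log.
set B := bst K.
have hsum : sumn [seq bst (nlinks L x) | x <- take vidx.+1 (anc v)] <= vidx.+1 * B.
  have h1 := @sumn_le_bound B [seq bst (nlinks L x) | x <- take vidx.+1 (anc v)].
  apply: leq_trans (h1 _) _; first by move=> x /mapP [y _ ->]; apply: bstm.
  by rewrite size_map leq_mul2r size_take_min geq_minl orbT.
have hbS : forall b : seq S, uniq b -> size b <= #|S|.
  by move=> b ub; rewrite -(card_uniqP ub) max_card.
have hbot : (if vidx == size (anc v) then bst (size (match c with inl s => if s \in bot then bot else s :: bot | inr _ => bot end)).+1 else 0) <= B.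
  case: ifP => // _; apply: bstm; apply: leq_trans hS; rewrite ltnS.
  destruct c as [s|p] => //=; last exact: hbS.
  by case: ifP => hb; apply: hbS; rewrite //= hb ubot.
have hch : bst (nchildren (Nd m) (take f.-1 (Pm m.+1))) <= B by apply: bstm.
have hl : forall x, bst (nlinks L x) <= B by move=> x; apply: bstm.
have hnx' : bst (size nx) <= B.
  apply: bstm; apply: leq_trans hP; rewrite -(size_map fst) -(card_uniqP unx) max_card //.
have hbt : bst (size bot) <= B by apply: bstm; apply: leq_trans (ltnW hS); apply: hbS.
rewrite ENS last_rcons size_takel //.
have e : vidx.+1 + f = size v + 3 by rewrite hvidx; lia.
set X1 := sumn _ in hsum *.
set X2 := (if _ then _ else _) in hbot *.
set X3 := bst (nchildren _ _) in hch *.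
set X4 := bst (nlinks L _).
have h4 : X4 <= B by apply: hl.
nia.
Qed.
End Step.

Section Count.
Variables S P : finType.
Local Notation pchar := (pchar S P).
Local Notation pc := (pc S).
Local Notation pat := (@Defs.prev_at S P).

Lemma pat_inr_iff (Y : seq pchar) t c d : t <= size Y -> 0 < d -> isp c ->
  pat Y t c = inr d <-> [/\ d <= t, nth c Y (t - d) = c & forall i, t - d < i < t -> nth c Y i <> c].
Proof.
move=> ht hd; case: c => // p _.
set r := rev (take t Y).
have hsr : size r = t by rewrite size_rev size_takel.
have hnr : forall k, k < t -> nth (inr p) r k = nth (inr p) Y (t - k.+1).
  move=> k hk; rewrite /r nth_rev; last by rewrite size_takel.
  by rewrite size_takel // nth_take //; lia.
rewrite /Defs.prev_at -/r; split.
  case: ifP => hin [] hk; last by move: hd; rewrite -hk.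
  have hkr : index (inr p : pchar) r < t by rewrite -hsr index_mem mem_rev.
  split; first by lia.
    have hin' : (inr p : pchar) \in r by rewrite mem_rev.
    by move: (nth_index (inr p) hin'); rewrite hnr // -hk.
  move=> i /andP [h1 h2] he.
  have hb := @before_find _ (inr p) (pred1 (inr p)) r (t - i.+1).
  rewrite hnr in hb; last by lia.
  have : t - i.+1 < find (pred1 (inr p : pchar)) r by rewrite -[find _ _]/(index (inr p : pchar) r); lia.
  move/hb; rewrite (_ : t - (t - i.+1).+1 = i); last by lia.
  by rewrite /= he eqxx.
move=> [h1 h2 h3].
have hin : (inr p : pchar) \in take t Y.
  by rewrite -h2 (_ : nth _ Y (t - d) = nth (inr p) (take t Y) (t - d)) ?mem_nth ?size_takel // ?nth_take //; lia.
rewrite hin; congr inr.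
have -> : index (inr p : pchar) r = d.-1.
  rewrite /index; apply: (@find_eq _ (inr p) (pred1 (inr p : pchar)) r); first by rewrite hsr; lia.
    move=> k hk; rewrite hnr; last by lia.
    by apply/negP => /eqP; apply: h3; lia.
  by move=> _; rewrite hnr /=; [rewrite (_ : t - d.-1.+1 = t - d) ?h2 //; lia | lia].
by rewrite prednK.
Qed.

Lemma pat_inl (Y : seq pchar) t s : pat Y t (inl s) = inl s.
Proof. by []. Qed.

Lemma pat_inr (Y : seq pchar) t p : exists v, pat Y t (inr p) = inr v.
Proof. by rewrite /Defs.prev_at; case: ifP => _; eexists. Qed.

Lemma zeros_bound (X : seq pchar) :
  size [seq d <- iota 0 (size X) | nth (inr 0) (prev_enc X) d == inr 0] <= #|P|.
Proof.
case: X => [|x0 X']; first by [].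
set X := x0 :: X'.
set Dz := filter _ _.
have hD : forall d, d \in Dz -> d < size X /\ exists p, nth x0 X d = inr p /\ (inr p : pchar) \notin take d X.
  move=> d; rewrite mem_filter mem_iota add0n => /andP [/eqP hz /andP [_ hd]]; split => //.
  move: hz; rewrite (nth_pe x0) //; case: (nth x0 X d) => [s|p] //.
  by rewrite /Defs.prev_at; case: ifP => hin heq; [case: heq | exists p; rewrite hin].
rewrite -(size_map (nth x0 X)) cardT -(size_map (fun p => (inr p : pchar))).
apply: uniq_leq_size.
  rewrite map_inj_in_uniq ?filter_uniq ?iota_uniq // => d1 d2 h1 h2 he.
  have [hd1 [p1 [e1 n1]]] := hD _ h1; have [hd2 [p2 [e2 n2]]] := hD _ h2.
  case: (ltngtP d1 d2) => // hlt; exfalso.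
    move/negP: n2; apply; rewrite -e2 -he.
    by rewrite -(nth_take x0 hlt) mem_nth // size_takel // ltnW.
  move/negP: n1; apply; rewrite -e1 he.
  by rewrite -(nth_take x0 hlt) mem_nth // size_takel // ltnW.
move=> y /mapP [d hd ->]; have [_ [p [-> _]]] := hD _ hd.
by apply: map_f; rewrite mem_enum.
Qed.


Definition isinr (y : pc) : bool := if y is inr _ then true else false.
Definition Du (u : seq pc) := [seq j <- iota 0 (size u) | isinr (nth (inr 0) u j) &&
   all (fun i => nth (inr 0) u i != inr (i - j)) (iota j.+1 (size u - j.+1))].

Lemma mem_Du u j : j \in Du u -> [/\ j < size u, isinr (nth (inr 0) u j) &
   forall i, j < i < size u -> nth (inr 0) u i != inr (i - j)].
Proof.
rewrite mem_filter mem_iota add0n => /andP [/andP [hi /allP ha] /andP [_ hj]]; split => //.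
by move=> i hij; apply: ha; rewrite mem_iota; lia.
Qed.

Lemma Du_bound (U : seq pchar) : size (Du (prev_enc U)) <= #|P|.
Proof.
case: U => [|x0 U']; first by [].
set U := x0 :: U'.
set u := prev_enc U.
have hsu : size u = size U by rewrite size_pe.
have hD : forall j, j \in Du u -> [/\ j < size U, exists p, nth x0 U j = inr p &
    forall i, j < i < size U -> nth (inr 0) u i != inr (i - j)].
  move=> j /mem_Du [hj hi ha]; rewrite hsu in hj ha; split => //.
  move: hi; rewrite /u (nth_pe x0) //; case: (nth x0 U j) => [s|p] //.
  by exists p.
have claim : forall j1 j2, j1 \in Du u -> j2 \in Du u -> j1 < j2 -> nth x0 U j1 != nth x0 U j2.
  move=> j1 j2 h1 h2 hlt; apply/eqP => he.
  have [hj1 [p ep] ha] := hD _ h1; have [hj2 _ _] := hD _ h2.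
  set c := nth x0 U j1 in he ep.
  set X' := drop j1.+1 U.
  have hsX : size X' = size U - j1.+1 by rewrite size_drop.
  have hcX : c \in X'.
    have -> : c = nth x0 X' (j2 - j1.+1) by rewrite nth_drop he; congr nth; lia.
    by apply: mem_nth; rewrite hsX; lia.
  set k := index c X'.
  have hk : k < size X' by rewrite index_mem.
  set t := j1.+1 + k.
  have ht : t < size U by rewrite /t; lia.
  have hUt : nth x0 U t = c by rewrite /t -nth_drop nth_index.
  have hbet : forall i, j1 < i < t -> nth c U i <> c.
    move=> i hi; rewrite (set_nth_default x0); last by lia.
    have := @before_find _ x0 (pred1 c) X' (i - j1.+1).
    rewrite nth_drop (_ : j1.+1 + (i - j1.+1) = i); last by lia.
    move=> hb he2; have : i - j1.+1 < k by lia.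
    by move/hb; rewrite /= he2 eqxx.
  have hpat : pat U t c = inr (t - j1).
    apply/(pat_inr_iff (c := c)); [lia | lia | by rewrite ep | split].
    - lia.
    - rewrite (_ : t - (t - j1) = j1); last by lia.
      by rewrite (set_nth_default x0).
    - by move=> i hi; apply: hbet; lia.
  have hh : j1 < t < size U by rewrite /t; lia.
  by move: (ha t hh); rewrite /u (nth_pe x0) // hUt hpat eqxx.
rewrite -(size_map (nth x0 U) (Du u)) cardT -(size_map (fun p => (inr p : pchar)) (enum P)).
apply: uniq_leq_size.
  rewrite map_inj_in_uniq ?filter_uniq ?iota_uniq // => d1 d2 h1 h2 he.
  case: (ltngtP d1 d2) => // hlt; exfalso.
    by move/eqP: he; apply/negP; apply: claim.
  by move/eqP: he; rewrite eq_sym; apply/negP; apply: claim.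
move=> y /mapP [d hd ->]; have [_ [p ->] _] := hD _ hd.
by apply: map_f; rewrite mem_enum.
Qed.

Variable T : seq pchar.
Local Notation n := (size T).
Local Notation Nd := (Nd T).

Lemma node_form m w : m <= n -> w \in Nd m -> exists Y : seq pchar, w = prev_enc Y /\ size Y = size w.
Proof.
move=> hm hw; have [_ _ _ Ed _] := Nd_inv hm.
have [j hj Ew] := Ed _ hw.
exists (take (size w) (drop j T)); split; first by rewrite {1}Ew take_pe.
by rewrite -size_pe -take_pe -Ew.
Qed.

Lemma nlinks_bound m x : m <= n -> nlinks (map (@gl S) (behead (Nd m))) x <= #|S| + #|P| + 1.
Proof.
move=> hm; have [Ea Eb _ _ _] := Nd_inv hm.
have uB : uniq (behead (Nd m)) by move: Eb; rewrite Ea => /andP [].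
rewrite /nlinks count_map -size_filter.
set Z := filter _ _.
have hZ : forall z, z \in Z -> tl z = x /\ exists (c : pchar) X, z = prev_enc (c :: X).
  move=> z; rewrite mem_filter /= => /andP [/eqP ht hz]; split => //.
  exact: (node_valid hm hz).
case EZ: Z => [|z0 Z']; first by [].
rewrite -EZ.
have hz0 : z0 \in Z by rewrite EZ mem_head.
have [ht0 [c0 [X0 E0]]] := hZ z0 hz0.
have hx : x = prev_enc X0 by rewrite -ht0 E0 tl_pe.
rewrite -(size_map (@keyz S) Z).
pose Kx := map (fun s => (inl s : pc)) (enum S) ++ (inr 0 : pc) ::
   map (fun d => (inr d.+1 : pc)) [seq d <- iota 0 (size X0) | nth (inr 0) (prev_enc X0) d == inr 0].
apply: leq_trans (uniq_leq_size (s2 := Kx) _ _) _.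
- rewrite map_inj_in_uniq ?filter_uniq // => z1 z2 h1 h2 hk.
  have [t1 [c1 [X1 e1]]] := hZ _ h1; have [t2 [c2 [X2 e2]]] := hZ _ h2.
  apply: valid_inj => //; [by exists c1, X1 | by exists c2, X2 | by rewrite t1 t2].
- move=> k /mapP [z hz ->]; have [tz [c [X ez]]] := hZ _ hz.
  have hXX : prev_enc X = prev_enc X0 by rewrite -(tl_pe c) -ez tz hx.
  rewrite ez keyz_pe /Kx mem_cat; case: c ez => [s|p] ez.
    by rewrite map_f ?mem_enum.
  apply/orP; right; case: ifP => hin; last by rewrite mem_head.
  rewrite inE; apply/orP; right; apply: map_f.
  have hsX : size X = size X0 by rewrite -(size_pe X) hXX size_pe.
  rewrite mem_filter mem_iota /= -hsX index_mem hin andbT -hXX (nth_pe (inr p)) ?index_mem //.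
  by rewrite nth_index // /Defs.prev_at (negbTE (index_notin_take (erefl _))).
- rewrite size_cat /= !size_map -enumT -cardT.
  by rewrite addnS addn1 ltnS leq_add2l; exact: zeros_bound.
Qed.

Lemma nchildren_bound m u : m <= n -> nchildren (Nd m) u <= #|S| + #|P| + 1.
Proof.
move=> hm; have [Ea Eb Ec Ed _] := Nd_inv hm.
rewrite /nchildren -size_filter.
set Ch := filter _ _.
have hCh : forall w, w \in Ch -> [/\ size w = (size u).+1, take (size u) w = u & w \in Nd m].
  by move=> w; rewrite mem_filter => /andP [/andP [/eqP -> /eqP ->] ->].
case ECh: Ch => [|w0 Ch']; first by [].
rewrite -ECh.
have hw0 : w0 \in Ch by rewrite ECh mem_head.
have [hs0 ht0 hn0] := hCh w0 hw0.
have [Y0 [eY0 sY0]] := node_form hm hn0.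
case: Y0 eY0 sY0 => [|d0 Y0'] eY0 sY0; first by move: sY0; rewrite hs0.
set U := take (size u) (d0 :: Y0').
have hu : u = prev_enc U by rewrite -ht0 eY0 take_pe.
rewrite -(size_map (fun w => nth (inr 0) w (size u)) Ch).
pose Ku := map (fun s => (inl s : pc)) (enum S) ++ (inr 0 : pc) :: map (fun j => (inr (size u - j) : pc)) (Du u).
apply: leq_trans (uniq_leq_size (s2 := Ku) _ _) _.
- have hr : forall w, w \in Ch -> w = rcons u (nth (inr 0) w (size u)).
    move=> w hw; have [hs ht _] := hCh w hw.
    have := take_nth (inr 0) (_ : size u < size w); rewrite hs => /(_ (ltnSn _)).
    by rewrite take_oversize ?hs // ht.
  rewrite map_inj_in_uniq ?filter_uniq // ?Eb // => w1 w2 h1 h2 he.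
  by rewrite (hr _ h1) (hr _ h2) he.
- move=> y /mapP [w hw ->]; have [hs ht hn] := hCh w hw.
  have [Y [eY sY]] := node_form hm hn.
  have hsY : size u < size Y by rewrite sY hs.
  have hnu : forall i, i < size u -> nth (inr 0) u i = pat Y i (nth d0 Y i).
    by move=> i hi; rewrite -ht nth_take // eY (nth_pe d0) //; apply: ltn_trans hi hsY.
  rewrite eY (nth_pe d0) // /Ku mem_cat.
  case Ey: (nth d0 Y (size u)) => [s|p].
    by rewrite pat_inl map_f ?mem_enum.
  have [v ev] := pat_inr Y (size u) p; rewrite ev.
  case: v ev => [|d] ev; first by rewrite inE eqxx orbT.
  have := ev; move/(pat_inr_iff (c := inr p)) => /(_ (ltnW hsY) (ltn0Sn _) erefl) [hd hYj hbet].
  apply/orP; right; rewrite inE; apply/orP; right.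
  have -> : (inr d.+1 : pc) = inr (size u - (size u - d.+1)) by congr inr; lia.
  apply: map_f.
  have hj : size u - d.+1 < size u by lia.
  rewrite mem_filter mem_iota add0n hj leq0n !andbT.
  rewrite hnu // (set_nth_default (inr p)); last exact: leq_ltn_trans (leq_subr _ _) hsY.
  rewrite hYj; have [v' ->] := pat_inr Y (size u - d.+1) p; rewrite /=.
  apply/allP => i; rewrite mem_iota => /andP [hi1 hi2].
  have hiu : i < size u by lia.
  rewrite hnu //; apply/negP => /eqP hpi.
  case EYi: (nth d0 Y i) hpi => [s'|p'] hpi; first by rewrite pat_inl in hpi.
  move: hpi; move/(pat_inr_iff (c := inr p')) => /(_ _ _ erefl) [].
  + by apply: ltnW; apply: ltn_trans hiu hsY.
  + lia.
  + move=> _ hYj' _.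
    apply: (hbet i); first by rewrite hi1 hiu.
    rewrite (set_nth_default d0); last by apply: ltn_trans hiu hsY.
    rewrite EYi; rewrite (_ : i - (i - (size u - d.+1)) = size u - d.+1) in hYj'; last by lia.
    by rewrite -hYj' -hYj; apply: set_nth_default; exact: leq_ltn_trans (leq_subr _ _) hsY.
- rewrite size_cat /= !size_map -?enumT -cardT addnS addn1 ltnS leq_add2l hu.
  exact: Du_bound.
Qed.
End Count.

Section Final.
Variables S P : finType.
Local Notation pchar := (pchar S P).
Variable T : seq pchar.
Local Notation n := (size T).
Local Notation Nd := (Nd T).

Lemma size_Nd m : m <= n -> size (Nd m) = m.+1.
Proof.
elim: m => [|m IH] hm; first by rewrite Nd0.
by rewrite NdS // /sht_insert size_rcons IH // ltnW.
Qed.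

Lemma run_inv m : m <= n ->
  SInv T m (run T m).1 /\
  (run T m).2 + bst (#|S| + #|P| + 1) * size (last [::] (Nd m)) <= 8 * bst (#|S| + #|P| + 1) * m.
Proof.
set K := #|S| + #|P| + 1.
elim: m => [_|m IH hm].
  split; last by rewrite Nd0 /= !muln0.
  split => //=; rewrite ?Nd0 //.
  by move=> p; rewrite subn0 drop_size.
have [hI hc] := IH (ltnW hm).
have [EN EL _ _ _] := hI.
have [c Ec] := drop_cons hm.
have hq : (n - m).-1 = n - m.+1 by lia.
have Erun : run T m.+1 = ((step T (n - m) c (run T m).1).1, (run T m).2 + (step T (n - m) c (run T m).1).2).
  rewrite /=; case: (run T m) => st cst /=; rewrite hq Ec.
  by case: (step T (n - m) c st).
have [hs hcost] := step_ok hm hI Ec.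
have E2 : (run T m.+1).2 = (run T m).2 + (step T (n - m) c (run T m).1).2 by rewrite Erun.
split; first by rewrite Erun.
rewrite E2.
have hL : forall x, nlinks (st_links (run T m).1) x <= K by move=> x; rewrite EL; apply: nlinks_bound; apply: ltnW.
have hC : forall u, nchildren (st_nodes (run T m).1) u <= K by move=> u; rewrite EN; apply: nchildren_bound; apply: ltnW.
have := hcost K hL hC.
have h1 : #|S| < K by rewrite /K; lia.
have h2 : #|P| <= K by rewrite /K; lia.
move=> /(_ h1 h2) h; rewrite mulnS.
move: hc h; set B := bst K; set a := size (last [::] (Nd m)); set b := size (last [::] (Nd m.+1)).
set x := (run T m).2; set y := (step _ _ _ _).2; lia.
Qed.
End Final.

Lemma tl2_bound x : 0 < x -> trunc_log 2 (x + 2) <= (trunc_log 2 x).+2.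
Proof.
move=> hx.
have h4 : x + 2 <= 2 * (2 * x) by lia.
apply: leq_trans (leq_trunc_log 2 h4) _.
by rewrite !trunc_logMp // muln_gt0.
Qed.

Theorem lemma7 :
  exists c : nat, forall (S P : finType) (T : seq (S + P)),
    (forall m, m <= size T ->
       st_nodes (run T m).1 = PPH T (size T - m).+1) /\
    (run T (size T)).2 <= c * size T * (trunc_log 2 (#|S| + #|P|)).+1 /\
    (forall m, m <= size T -> space (run T m).1 <= c * (size T).+1).
Proof.
exists 24 => S P T.
split; [|split].
- by move=> m hm; have [[EN _ _ _ _] _] := run_inv hm.
- have [_ hc] := run_inv (leqnn (size T)).
  case: T hc => [|x T'] hc; first by [].
  set T := x :: T' in hc *.
  have hx : 0 < #|S| + #|P|.
    case: x {hc T} => [s|p]; [apply: ltn_addr; apply/card_gt0P; by exists s | apply: ltn_addl; apply/card_gt0P; by exists p].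
  set t := trunc_log 2 (#|S| + #|P|).
  have hB : bst (#|S| + #|P| + 1) <= 3 * t.+1.
    rewrite /bst (_ : (#|S| + #|P| + 1).+1 = #|S| + #|P| + 2); last by rewrite addn1 addn2.
    have := tl2_bound hx; rewrite -/t; lia.
  apply: leq_trans (leq_trans (leq_addr _ _) hc) _.
  set B := bst _ in hB *; set N := size T.
  nia.
- move=> m hm; have [[EN EL _ [_ snx] [_ sb]] _] := run_inv hm.
  rewrite /space EN EL size_map size_behead size_Nd //=.
  lia.
Qed.
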